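(* Let $s\in(0,1)$, $\kappa>0$, and let $\mathcal{T}$ and $|\cdot|$ be as in the context. (i) If $s\le 3/4$, then (for every $\kappa>0$) there is $\tau\in\mathcal{T}\setminus\{\Xi\}$ with $|\tau|\le|\Xi|$. (ii) If $s>3/4$, then there is $\kappa_0(s)>0$ such that for all $\kappa\in(0,\kappa_0)$ one has $|\Xi|<|\tau|$ for all $\tau\in\mathcal{T}\setminus\{\Xi\}$; moreover, in this case, for every $\beta\in\mathbb{R}$ the set $\mathcal{T}_{<\beta}:=\{\tau\in\mathcal{T}:|\tau|<\beta\}$ is finite.
   Context: Fix $d\ge1$. Consider formal symbols (non-planar decorated rooted trees): a noise symbol $\Xi$ and monomials $\mathbf{X}^k$, $k\in\mathbb{N}^{1+d}$ (with $\mathbf{1}:=\mathbf{X}^0$), together with abstract integration maps $\mathcal{I}$ and $\mathcal{I}_j$ ($j=1,\dots,d$) and a commutative, associative product (with unit $\mathbf{1}$, and $\mathbf{X}^k\mathbf{X}^m=\mathbf{X}^{k+m}$). The set $\mathcal{T}$ is the smallest set containing $\Xi$ and all $\mathbf{X}^k$ such that whenever $\tau_1,\tau_2,\tau_3\in\mathcal{T}$, $j\in\{1,\dots,d\}$, $k\in\mathbb{N}^{1+d}$, the symbols $\mathbf{X}^k\mathcal{I}(\tau_1)$, $\mathbf{X}^k\mathcal{I}_j(\tau_1)$, $\mathbf{X}^k\mathcal{I}(\tau_1)\mathcal{I}(\tau_2)$ and $\mathcal{I}(\tau_1)\mathcal{I}(\tau_2)\mathcal{I}(\tau_3)$ belong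 to $\mathcal{T}$, with the convention that $\mathcal{I}(\mathbf{X}^k)=0$ (integration is not applied to pure monomials). Homogeneity: $|\Xi|:=-s-\frac32-\kappa$, $|\mathbf{X}^k|:=2sk_0+\sum_{i=1}^dk_i$, $|\mathcal{I}(\tau)|:=|\tau|+2s$, $|\mathcal{I}_j(\tau)|:=|\tau|+2s-1$, and the homogeneity of a product is the sum of the homogeneities of the factors. *)

(* Defs.v *)
From Stdlib Require Lists.List.
From mathcomp Require Import all_boot all_order all_algebra.
From mathcomp Require Import reals.
Set Implicit Arguments. Unset Strict Implicit. Unset Printing Implicit Defensive.
Import Order.TTheory GRing.Theory Num.Theory.
Local Open Scope ring_scope.

(* Multi-indices k in N^{1+d}: k 0 is the time component, k (lift 0 i) the
   space components i = 1..d. *)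
Definition mindex (d : nat) := {ffun 'I_d.+1 -> nat}.

(* Decorated rooted trees: either the noise Xi, or a root decorated by a
   monomial X^k multiplied by a product of planted trees; an edge labelled
   [None] is I(.), an edge labelled [Some j] is I_{j+1}(.) (j : 'I_d). *)
Inductive symb (d : nat) : Type :=
| Xi : symb d
| Node : mindex d -> list (option 'I_d * symb d) -> symb d.
Arguments Xi {d}.

Definition is_mono d (t : symb d) : bool :=
  match t with Node _ nil => true | _ => false end.

Definition mono0 d : mindex d := [ffun => 0%N].

(* The set \mathcal{T}. I(X^k) = 0 (and I_j(X^k) = 0) is enforced by
   requiring the integrand not to be a pure monomial. *)
Inductive inT (d : nat) : symb d -> Prop :=
| T_Xi : inT Xi
| T_X (k : mindex d) : inT (Node k nil)
| T_I (k : mindex d) t : inT t -> ~~ is_mono t -> inT (Node k [:: (None, t)])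
| T_Ij (k : mindex d) (j : 'I_d) t : inT t -> ~~ is_mono t ->
    inT (Node k [:: (Some j, t)])
| T_II (k : mindex d) t1 t2 : inT t1 -> ~~ is_mono t1 -> inT t2 -> ~~ is_mono t2 ->
    inT (Node k [:: (None, t1); (None, t2)])
| T_III t1 t2 t3 : inT t1 -> ~~ is_mono t1 -> inT t2 -> ~~ is_mono t2 ->
    inT t3 -> ~~ is_mono t3 ->
    inT (Node (mono0 d) [:: (None, t1); (None, t2); (None, t3)]).

Section Hom.
Variables (R : realType) (d : nat) (s kappa : R).

Definition mono_hom (k : mindex d) : R :=
  2 * s * (k ord0)%:R + \sum_(i < d) (k (lift ord0 i))%:R.

Fixpoint shom (t : symb d) : R :=
  match t with
  | Xi => - s - 3 / 2 - kappa
  | Node k es =>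
      mono_hom k +
      (fix go (es : list (option 'I_d * symb d)) : R :=
         match es with
         | nil => 0
         | (o, t') :: es' =>
             (shom t' + 2 * s - (if o is Some _ then 1 else 0)) + go es'
         end) es
  end.
End Hom.

Definition finite_symbs d (P : symb d -> Prop) : Prop :=
  exists l : seq (symb d), forall t, P t -> Stdlib.Lists.List.In t l.

(* Main.v *)
Require Import Defs.
From mathcomp Require Import all_boot all_order all_algebra.
From mathcomp Require Import reals.
From mathcomp Require Import lra zify.
From Stdlib Require Lists.List.
Set Implicit Arguments. Unset Strict Implicit.
Import Order.TTheory GRing.Theory Num.Theory.
Local Open Scope ring_scope.

Definition ksum d (k : mindex d) : nat := (\sum_(i < d.+1) k i)%N.

Fixpoint sz d (t : symb d) : nat :=
  match t with
  | Xi => 1%N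
  | Node k es => (1 + ksum k +
      (fix go (es : list (option 'I_d * symb d)) : nat :=
         match es with nil => 0%N | (_, t') :: es' => (sz t' + go es')%N end) es)%N
  end.

Lemma mono_hom_ge (R : realType) d (s c : R) (k : mindex d) :
  0 <= c -> c <= 1 -> c <= 2 * s -> c * (ksum k)%:R <= mono_hom s k.
Proof.
move=> c0 c1 c2; rewrite /mono_hom /ksum big_ord_recl natrD natr_sum.
rewrite mulrDr; apply: lerD.
  by apply: ler_wpM2r => //; rewrite ler0n.
rewrite mulr_sumr; apply: ler_sum => i _.
by rewrite -[X in _ <= X]mul1r; apply: ler_wpM2r => //; rewrite ler0n.
Qed.

Lemma hom_lb (R : realType) d (s kappa c : R) :
  let a := - s - 3 / 2 - kappa in
  0 <= c -> c <= 1 -> c <= 2 * s - 1 -> 2 * c <= a + 4 * s ->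
  3 * c <= 2 * a + 6 * s -> a < 0 ->
  forall t : symb d, inT t -> a + c * ((sz t)%:R - 1) <= shom s kappa t.
Proof.
move=> a c0 c1 c2 c3 c4 a0 t; elim => /=.
- rewrite subrr mulr0 addr0 /a; lra.
- move=> k; have := mono_hom_ge k c0 c1 (ltac:(lra) : c <= 2 * s).
  rewrite ?addn0 ?natrD /=; nra.
- move=> k t1 _ IH _; have := mono_hom_ge k c0 c1 (ltac:(lra) : c <= 2 * s).
  rewrite ?addn0 ?natrD /=; nra.
- move=> k j t1 _ IH _; have := mono_hom_ge k c0 c1 (ltac:(lra) : c <= 2 * s).
  rewrite ?addn0 ?natrD /=; nra.
- move=> k t1 t2 _ IH1 _ _ IH2 _; have := mono_hom_ge k c0 c1 (ltac:(lra) : c <= 2 * s).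
  rewrite ?addn0 ?natrD /=; nra.
- move=> t1 t2 t3 _ IH1 _ _ IH2 _ _ IH3 _; have := mono_hom_ge (mono0 d) c0 c1 (ltac:(lra) : c <= 2 * s).
  rewrite ?addn0 ?natrD /=; nra.
Qed.
Lemma in_seqP (T : eqType) (x : T) (s : seq T) : x \in s -> List.In x s.
Proof. elim: s => //= y s IH; rewrite inE => /orP [/eqP ->|/IH]; auto. Qed.

Definition Klist d n : seq (mindex d) :=
  map (fun g : {ffun 'I_d.+1 -> 'I_n.+1} => [ffun i => nat_of_ord (g i)])
      (enum {ffun 'I_d.+1 -> 'I_n.+1}).

Lemma Klist_in d n (k : mindex d) : (ksum k <= n)%N -> List.In k (Klist d n).
Proof.
move=> hk; apply/List.in_map_iff; exists [ffun i => inord (k i)]; split.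
  apply/ffunP => i; rewrite !ffunE inordK // ltnS; apply: leq_trans _ hk.
  rewrite /ksum (bigD1 i) //=; exact: leq_addr.
by apply: in_seqP; rewrite mem_enum.
Qed.

Lemma sz_pos d (t : symb d) : (1 <= sz t)%N.
Proof. by case: t. Qed.

Lemma fin_sz d n : exists l : seq (symb d), forall t, inT t -> (sz t <= n)%N -> List.In t l.
Proof.
elim: n => [|n [l IH]].
  by exists nil => t _; rewrite leqn0 => /eqP h; have := sz_pos t; rewrite h.
pose K := Klist d n.
exists (Xi :: List.map (fun k => Node k nil) K ++
  List.flat_map (fun k => List.map (fun t => Node k [:: (None, t)]) l) K ++
  List.flat_map (fun k => List.flat_map (fun j => List.map (fun t => Node k [:: (Some j, t)]) l) (enum 'I_d)) K ++
  List.flat_map (fun k => List.flat_map (fun t1 => List.map (fun t2 => Node k [:: (None, t1); (None, t2)]) l) l) K ++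
  List.flat_map (fun t1 => List.flat_map (fun t2 => List.map (fun t3 => Node (mono0 d) [:: (None, t1); (None, t2); (None, t3)]) l) l) l).
move=> t; case => /=.
- by left.
- move=> k hk; right; apply/List.in_or_app; left.
  apply/List.in_map_iff; exists k; split => //; apply: Klist_in; lia.
- move=> k t1 h1 _ hk; right; apply/List.in_or_app; right; apply/List.in_or_app; left.
  apply/List.in_flat_map; exists k; split; first by apply: Klist_in; lia.
  apply/List.in_map_iff; exists t1; split => //; apply: IH => //; lia.
- move=> k j t1 h1 _ hk; right; apply/List.in_or_app; right; apply/List.in_or_app; right; apply/List.in_or_app; left.
  apply/List.in_flat_map; exists k; split; first by apply: Klist_in; lia.
  apply/List.in_flat_map; exists j; split; first by apply: in_seqP; rewrite mem_enum.
  apply/List.in_map_iff; exists t1; split => //; apply: IH => //; lia.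
- move=> k t1 t2 h1 _ h2 _ hk; right; apply/List.in_or_app; right; apply/List.in_or_app; right; apply/List.in_or_app; right; apply/List.in_or_app; left.
  apply/List.in_flat_map; exists k; split; first by apply: Klist_in; lia.
  apply/List.in_flat_map; exists t1; split; first by apply: IH => //; lia.
  apply/List.in_map_iff; exists t2; split => //; apply: IH => //; lia.
- move=> t1 t2 t3 h1 _ h2 _ h3 _ hk; right; apply/List.in_or_app; right; apply/List.in_or_app; right; apply/List.in_or_app; right; apply/List.in_or_app; right.
  apply/List.in_flat_map; exists t1; split; first by apply: IH => //; lia.
  apply/List.in_flat_map; exists t2; split; first by apply: IH => //; lia.
  apply/List.in_map_iff; exists t3; split => //; apply: IH => //; lia.
Qed.

Lemma sz_ge2 d (t : symb d) : inT t -> t <> Xi -> ~~ is_mono t -> (2 <= sz t)%N.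
Proof.
case => //=.
- move=> k t1 _ _ _ _; have := sz_pos t1; lia.
- move=> k j t1 _ _ _ _; have := sz_pos t1; lia.
- move=> k t1 t2 _ _ _ _ _ _; have := sz_pos t1; lia.
- move=> t1 t2 t3 _ _ _ _ _ _ _ _; have := sz_pos t1; lia.
Qed.

Lemma mono_hom0 (R : realType) d (s : R) : mono_hom s (mono0 d) = 0.
Proof.
rewrite /mono_hom ffunE mulr0 add0r big1 // => i _; by rewrite ffunE.
Qed.

Theorem lemma2p2 (R : realType) (d : nat) (hd : (1 <= d)%N) (s : R)
  (hs0 : 0 < s) (hs1 : s < 1) :
  (s <= 3 / 4 ->
     forall kappa : R, 0 < kappa ->
       exists tau : symb d, inT tau /\ tau <> Xi /\
         shom s kappa tau <= shom s kappa (@Xi d))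
  /\
  (3 / 4 < s ->
     exists kappa0 : R, 0 < kappa0 /\
       forall kappa : R, 0 < kappa -> kappa < kappa0 ->
         (forall tau : symb d, inT tau -> tau <> Xi ->
            shom s kappa (@Xi d) < shom s kappa tau)
         /\ (forall beta : R,
               finite_symbs (fun tau : symb d => inT tau /\ shom s kappa tau < beta))).
Proof.
split.
  move=> hs kappa hk.
  exists (Node (mono0 d) [:: (None, Xi); (None, Xi); (None, Xi)]); split.
    by apply: T_III; try exact: T_Xi.
  split => //=; rewrite mono_hom0; lra.
move=> hs; exists ((4 * s - 3) / 2); split; first lra.
move=> kappa hk0 hk1.
pose a := - s - 3 / 2 - kappa.
pose c := (4 * s - 3 - 2 * kappa) / 3.
have c0 : 0 < c by rewrite /c; lra.
have Hlb := @hom_lb R d s kappa c (ltW c0) ltac:(rewrite /c; lra) ltac:(rewrite /c; lra)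
   ltac:(rewrite /c; lra) ltac:(rewrite /c; lra) ltac:(lra).
split.
  move=> tau htau hne.
  have ex : shom s kappa (@Xi d) = a by [].
  rewrite ex.
  case hm: (is_mono tau).
    case: tau htau hne hm => // k [|//] _ _ _.
    have e : shom s kappa (Node k nil) = mono_hom s k + 0 by [].
    rewrite e addr0.
    have h0 : (0:R) <= 2 * s by lra.
    have := mono_hom_ge k (lexx 0) ler01 h0; rewrite mul0r => h.
    have : a < 0 by rewrite /a; lra.
    lra.
  have h2 := sz_ge2 htau hne (negbT hm).
  have h2' : (2 : R) <= (sz tau)%:R by rewrite (ler_nat R 2).
  have h4 : 0 < c * ((sz tau)%:R - 1) by apply: mulr_gt0 => //; lra.
  have h5 := Hlb tau htau; simpl in h5.
  rewrite /a in h5 *; lra.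
move=> beta.
pose x := (beta - a) / c + 1.
have [l Hl] := fin_sz d (Num.bound `|x|).
exists l => tau [htau hb]; apply: Hl => //.
have H := Hlb tau htau; simpl in H.
have hx : (sz tau)%:R < x.
  have h3 : c * ((sz tau)%:R - 1) < beta - a by rewrite /a in H *; lra.
  rewrite /x -ltrBlDr ltr_pdivlMr // mulrC; exact: h3.
have := archi_boundP (normr_ge0 x).
have := ler_norm x.
move=> h1 h2; apply: ltnW; rewrite -(ltr_nat R); lra.
Qed.
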